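(* Let $\Gamma$ be a connected extended Coxeter diagram with all vertex labels finite, and let $H^0=\{x\in\mathbb{C}^I: H_\Gamma(x,y)=0\text{ for all }y\in\mathbb{C}^I\}$ be the kernel of $H_\Gamma$. Then $G_\Gamma$ acts trivially on $H^0$ via $\rho$, and every proper $\rho(G_\Gamma)$-invariant subspace of $\mathbb{C}^I$ is contained in $H^0$.
   Context: An extended Coxeter diagram $\Gamma$ is a finite simplicial graph with vertex set $I$, labels $p_i\in\mathbb{Z}_{\ge2}\cup\{\infty\}$ on vertices and $m_{ij}\in\mathbb{Z}_{\ge3}\cup\{\infty\}$ on edges ($m_{ij}=2$ for non-edges, and $p_i=p_j$ whenever $m_{ij}$ is odd). $G_\Gamma=\langle s_i, i\in I\mid \mathrm{prod}(s_i,s_j;m_{ij})=\mathrm{prod}(s_j,s_i;m_{ij}),\ s_i^{p_i}=1\rangle$, with $\mathrm{prod}(a,b;m)$ the alternating word $aba\cdots$ of length $m$ (relations with $\infty$ omitted). For distinct $i,j$ joined by an edge set $\alpha_{ij}=-\left(\frac{\cos(\pi/p_i-\pi/p_j)+\cos(2\pi/m_{ij})}{2\sin(\pi/p_i)\sin(\pi/p_j)}\right)^{1/2}$; set $\alpha_{ii}=1$ and $\alpha_{ij}=0$ if $i\ne j$ are not joined by an edge. $H_\Gamma=\langle\cdot,\cdot\rangle$ is the Hermitian form on $\mathbb{C}^I$ with basis $\{e_i\}$ given by $\langle e_i,e_j\rangle=\alpha_{ij}$. The representation $\rho=\rho_\Gamma$ of $G_\Gamma$ on $\mathbb{C}^I$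 sends $s_i$ to the complex reflection $R_i(z)=z+(\zeta_{p_i}-1)\langle z,e_i\rangle e_i$, where $\zeta_{p_i}=\exp(2\pi\sqrt{-1}/p_i)$. *)

(* Defs.v *)
From mathcomp Require Import all_boot all_order all_algebra.
From mathcomp Require Import complex.
From mathcomp Require Import reals trigo.
Set Implicit Arguments. Unset Strict Implicit. Unset Printing Implicit Defensive.
Import Order.TTheory GRing.Theory Num.Theory.
Local Open Scope ring_scope.
Local Open Scope complex_scope.

Section CoxeterDefs.
Variable R : realType.
Variable n : nat.

(* Edge labels m : 'I_n -> 'I_n -> option nat, with [None] standing for infinity
   and [Some 2] meaning "no edge". *)
Definition is_edge (m : 'I_n -> 'I_n -> option nat) : rel 'I_n :=
  fun i j => (i != j) && (m i j != Some 2%N).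

(* cos(2 pi / m), with 2 pi / infinity = 0 *)
Definition cos2pi_over (o : option nat) : R :=
  match o with None => 1 | Some k => cos (2 * pi / k%:R) end.

Definition alpha (p : 'I_n -> nat) (m : 'I_n -> 'I_n -> option nat)
  (i j : 'I_n) : R :=
  if i == j then 1
  else if is_edge m i j then
    - Num.sqrt ((cos (pi / (p i)%:R - pi / (p j)%:R) + cos2pi_over (m i j))
                / (2 * sin (pi / (p i)%:R) * sin (pi / (p j)%:R)))
  else 0.

Definition Hform p m (z w : 'rV[R[i]]_n) : R[i] :=
  \sum_(j < n) \sum_(k < n) z 0 j * (alpha p m j k)%:C * (w 0 k)^*.

Definition zeta (q : nat) : R[i] :=
  (cos (2 * pi / q%:R)) +i* (sin (2 * pi / q%:R)).

(* Matrix of the complex reflection R_i acting on row vectors (z |-> z *m M):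
   R_i(z) = z + (zeta_{p_i} - 1) <z, e_i> e_i, where <z,e_i> = sum_j z_j alpha_ji. *)
Definition refl_mx p m (i : 'I_n) : 'M[R[i]]_n :=
  \matrix_(j, k) ((j == k)%:R
                  + (zeta (p i) - 1) * (alpha p m j i)%:C * (k == i)%:R).

(* The image rho(G_Gamma): the group generated by the matrices R_i. *)
Inductive in_rhoG p m : 'M[R[i]]_n -> Prop :=
  | rhoG1 : in_rhoG p m 1%:M
  | rhoG_mul i g : in_rhoG p m g -> in_rhoG p m (refl_mx p m i *m g)
  | rhoG_inv i g : in_rhoG p m g -> in_rhoG p m (invmx (refl_mx p m i) *m g).

Definition ext_coxeter_diagram (p : 'I_n -> nat) (m : 'I_n -> 'I_n -> option nat) :=
  [/\ forall i, (2 <= p i)%N,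
      forall i j, m i j = m j i,
      forall i j, i != j -> m i j = None \/ exists2 k, m i j = Some k & (2 <= k)%N
    & forall i j k, i != j -> m i j = Some k -> odd k -> p i = p j].

Definition connected_diagram (m : 'I_n -> 'I_n -> option nat) :=
  forall i j, connect (is_edge m) i j.

Definition in_H0 p m (x : 'rV[R[i]]_n) := forall y, Hform p m x y = 0.

End CoxeterDefs.

(* Main.v *)
Require Import Defs.
From mathcomp Require Import all_boot all_order all_algebra.
From mathcomp Require Import complex.
From mathcomp Require Import reals trigo.
From mathcomp Require Import ring lra.
Import Order.TTheory GRing.Theory Num.Theory.
Set Implicit Arguments. Unset Strict Implicit.
Local Open Scope ring_scope.
Local Open Scope complex_scope.

Section Trig.
Variable R : realType.

Lemma piq_eq (q : nat) (a : R) : (1 <= q)%N -> a / q%:R * q%:R = a.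
Proof. move=> hq; rewrite mulfVK // pnatr_eq0 -lt0n //. Qed.

Lemma piq_bounds (q : nat) : (2 <= q)%N -> 0 < pi / q%:R :> R /\ pi / q%:R <= pi / 2 :> R.
Proof.
move=> hq; have q2 : (2 : R) <= q%:R by rewrite (ler_nat R 2 q).
have pi0 := @pi_gt0 R.
have := @piq_eq q pi (ltnW hq); set x := pi / _ => hx.
have x0 : 0 < x by rewrite /x divr_gt0 // (lt_le_trans _ q2).
split => //; nra.
Qed.

Lemma sinpiq_gt0 (q : nat) : (2 <= q)%N -> 0 < sin (pi / q%:R) :> R.
Proof.
move=> /piq_bounds [h1 h2]; apply: sin_gt0_pi; rewrite h1 /=.
have pi0 := @pi_gt0 R; lra.
Qed.

Lemma cospiq_gt0 (q : nat) : (3 <= q)%N -> 0 < cos (pi / q%:R) :> R.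
Proof.
move=> hq; have q3 : (3 : R) <= q%:R by rewrite (ler_nat R 3 q).
have pi0 := @pi_gt0 R.
have := @piq_eq q pi (ltnW (ltnW hq)); set x := pi / _ => hx.
have x0 : 0 < x by rewrite /x divr_gt0 // (lt_le_trans _ q3).
apply: cos_gt0_pihalf; apply/andP; split; nra.
Qed.

Lemma cos2piq (q : nat) : cos (2 * pi / q%:R) = cos (pi / q%:R) ^+ 2 *+ 2 - 1 :> R.
Proof. by rewrite -cos_mulr2n mulr2n mulrDl mulrDl mul1r. Qed.

Lemma cos2piq_ge0 (q : nat) : (4 <= q)%N -> 0 <= cos (2 * pi / q%:R) :> R.
Proof.
move=> hq; have q4 : (4 : R) <= q%:R by rewrite (ler_nat R 4 q).
have pi0 := @pi_gt0 R.
have := @piq_eq q (2 * pi) (ltnW (ltnW (ltnW hq))); set x := (2 * pi) / _ => hx.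
have x0 : 0 < x by rewrite /x divr_gt0 ?mulr_gt0 // (lt_le_trans _ q4).
apply: cos_ge0_pihalf; apply/andP; split; nra.
Qed.

Lemma zeta_neq1 (q : nat) : (2 <= q)%N -> zeta R q != 1.
Proof.
move=> hq; apply/eqP => /(congr1 (@complex.Re R)) /=.
rewrite cos2piq cos2sin2.
have := sinpiq_gt0 hq; set s := sin _ => hs.
move=> h; nra.
Qed.

Lemma cosdiff_gt0 (a b : nat) : (2 <= a)%N -> (2 <= b)%N ->
  0 < cos (pi / a%:R - pi / b%:R) :> R.
Proof.
move=> /piq_bounds [a1 a2] /piq_bounds [b1 b2].
apply: cos_gt0_pihalf; apply/andP; split; lra.
Qed.

Lemma alpha_lt0 n (p : 'I_n -> nat) m i j : ext_coxeter_diagram p m -> is_edge m i j ->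
  alpha R p m i j < 0.
Proof.
case=> hp hsym hm hodd he.
have /andP [hij hm2] := he.
rewrite /alpha (negbTE hij) he oppr_lt0 sqrtr_gt0.
apply: divr_gt0; last by rewrite !mulr_gt0 ?sinpiq_gt0.
have := hm i j hij; case=> [->|[k hk k2]].
  by rewrite /= addr_gt0 ?cosdiff_gt0.
rewrite hk /=.
have k3 : (3 <= k)%N by move: hm2 k2; rewrite hk; case: k {hk} => [|[|[|]]].
case ok: (odd k).
  rewrite (hodd i j k hij hk ok) subrr cos0 cos2piq.
  have := cospiq_gt0 k3; set c := cos _ => hc; nra.
have k4 : (4 <= k)%N by move: k3 ok; case: k {hk k2} => [|[|[|[|]]]].
by rewrite ltr_wpDr ?cos2piq_ge0 ?cosdiff_gt0.
Qed.
End Trig.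
Section Lin.
Variable R : realType.
Variable n : nat.
Variable p : 'I_n -> nat.
Variable m : 'I_n -> 'I_n -> option nat.

Definition acoef (u : 'rV[R[i]]_n) k := \sum_(j < n) u 0 j * (alpha R p m j k)%:C.

Lemma refl_act u i : u *m refl_mx R p m i =
  u + ((zeta R (p i) - 1) * acoef u i) *: delta_mx 0 i.
Proof.
apply/rowP => k; rewrite !mxE.
under eq_bigr do rewrite mxE mulrDr.
rewrite big_split /= (bigD1 k) //= eqxx mulr1 big1 => [|j /negbTE]; last first.
  by rewrite eq_sym => ->; rewrite mulr0.
rewrite addr0; congr (_ + _).
rewrite /acoef mulr_sumr mulr_suml; apply: eq_bigr => j _.
by ring.
Qed.

Lemma Hform_acoef u y : Hform p m u y = \sum_(k < n) acoef u k * (y 0 k)^*.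
Proof.
rewrite /Hform exchange_big; apply: eq_bigr => k _.
by rewrite /acoef mulr_suml.
Qed.

Lemma H0P u : in_H0 p m u <-> forall k, acoef u k = 0.
Proof.
split=> [h k | h y].
  have := h (delta_mx 0 k); rewrite Hform_acoef (bigD1 k) //= big1 => [|j hj].
    by rewrite mxE !eqxx /= rmorph1 mulr1 addr0.
  by rewrite mxE (negbTE hj) andbF raddf0 mulr0.
by rewrite Hform_acoef big1 // => k _; rewrite h mul0r.
Qed.

End Lin.

Lemma acoef_delta (R : realType) n (p : 'I_n -> nat) m (i a : 'I_n) :
  acoef p m (delta_mx 0 i) a = (alpha R p m i a)%:C.
Proof.
rewrite /acoef (bigD1 i) //= big1 => [|j hj]; first by rewrite mxE !eqxx mul1r addr0.
by rewrite mxE (negbTE hj) andbF mul0r.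
Qed.

Lemma realC_neq0 (R : realType) (a : R) : a != 0 -> a%:C != 0.
Proof. by move=> ha; apply/eqP => /(congr1 (@complex.Re R)) /= /eqP; rewrite (negbTE ha). Qed.

Theorem lemma2p3 (R : realType) (n : nat)
  (p : 'I_n -> nat) (m : 'I_n -> 'I_n -> option nat) :
  ext_coxeter_diagram p m -> connected_diagram m ->
  (forall g : 'M[R[i]]_n, in_rhoG p m g ->
     forall x, in_H0 p m x -> x *m g = x) /\
  (forall U : 'M[R[i]]_n,
     (forall g, in_rhoG p m g -> (U *m g <= U)%MS) ->
     (\rank U < n)%N ->
     forall x : 'rV[R[i]]_n, (x <= U)%MS -> in_H0 p m x).
Proof.
move=> hcox hconn; have hp : forall i, (2 <= p i)%N by case: hcox.
split.
  move=> g hg x /H0P hx.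
  have hR i : x *m refl_mx R p m i = x.
    by rewrite refl_act hx mulr0 scale0r addr0.
  elim: hg => [|i g' _ IH|i g' _ IH]; first by rewrite mulmx1.
    by rewrite mulmxA hR IH.
  rewrite mulmxA; case: (boolP (refl_mx R p m i \in unitmx)) => hu.
    by rewrite -{1}(hR i) -[x *m _ *m invmx _]mulmxA mulmxV // mulmx1 IH.
  by rewrite invmx_out ?inE // hR IH.
move=> U hU hrk x hx; apply/H0P => k.
have inv i : (U *m refl_mx R p m i <= U)%MS.
  by have := hU _ (rhoG_mul i (@rhoG1 _ _ p m)); rewrite mulmx1.
have step u i : (u <= U)%MS ->
    (((zeta R (p i) - 1) * acoef p m u i) *: (delta_mx 0 i : 'rV[R[i]]_n) <= U)%MS.
  move=> hu; have h1 : (u *m refl_mx R p m i <= U)%MS := submx_trans (submxMr _ hu) (inv i).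
  have : (u *m refl_mx R p m i - u <= U)%MS by rewrite addmx_sub // eqmx_opp.
  by rewrite refl_act addrAC subrr add0r.
have noe i : ~ ((delta_mx 0 i : 'rV[R[i]]_n) <= U)%MS.
  move=> hi; suff : (1%:M <= U)%MS by rewrite sub1mx /row_full => /eqP h; rewrite h ltnn in hrk.
  apply/row_subP => j; rewrite row1.
  have /connectP [s hpath ->] := hconn i j.
  elim: s i hi hpath => [|a s IH] i hi //= /andP [he hpa]; apply: IH hpa.
  have := step _ a hi; rewrite acoef_delta eqmx_scale // mulf_neq0 //.
    by rewrite subr_eq0 zeta_neq1.
  by rewrite realC_neq0 // lt_eqF // alpha_lt0.
case: (acoef p m x k =P 0) => // hne; exfalso; apply: (noe k).
have := step _ k hx; rewrite eqmx_scale // mulf_neq0 //; last exact/eqP.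
by rewrite subr_eq0 zeta_neq1.
Qed.
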